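(* For every $k\ge 1$, the commutator subgroup of $G_k$ consists exactly of commutators: $$G_k'=\{[f_1,f_2]: f_1,f_2\in G_k\}.$$
   Context: $G_k$ is the subgroup of the automorphism group $B_k\cong\wr_{i=1}^kC_2$ of the binary rooted tree of depth $k$ consisting of automorphisms acting by even permutations on the $2^k$ leaves; $G_k\cong\mathrm{Syl}_2(A_{2^k})$. $[a,b]=aba^{-1}b^{-1}$. *)

(* Defs.v *)
From mathcomp Require Import all_boot fingroup perm.
Set Implicit Arguments. Unset Strict Implicit. Unset Printing Implicit Defensive.

(* Leaves of the binary rooted tree of depth k: binary words of length k.
   A vertex at level j is a word of length j; the ancestor of leaf x at
   level j is its prefix [take j x]. *)
Definition leaf (k : nat) := (k.-tuple bool)%type.

(* A permutation of the leaves is (the leaf action of) a tree automorphism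
   iff it preserves the ancestor structure: leaves with the same level-j
   ancestor are sent to leaves with the same level-j ancestor, for all j.
   Tree automorphisms act faithfully on the leaves, so B_k is identified
   with this subgroup of Sym(leaves). *)
Definition tree_aut (k : nat) (s : {perm leaf k}) : bool :=
  [forall x : leaf k, forall y : leaf k, forall j : 'I_k.+1,
     (take j x == take j y) ==> (take j (s x) == take j (s y))].

Definition B (k : nat) : {set {perm leaf k}} := [set s | tree_aut s].

Definition G (k : nat) : {set {perm leaf k}} := [set s in B k | ~~ odd_perm s].

(* Paper's commutator convention [a,b] = a b a^-1 b^-1. *)
Definition pcomm (gT : finGroupType) (a b : gT) : gT := (a * b * a^-1 * b^-1)%g.

(* Main.v *)
Require Import Defs.
From mathcomp Require Import all_boot fingroup perm.
From mathcomp Require Import morphism quotient commutator.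
Set Implicit Arguments. Unset Strict Implicit. Unset Printing Implicit Defensive.
Local Open Scope group_scope.

Definition lc n (c : bool) (x : leaf n) : leaf n.+1 := cons_tuple c x.

Lemma leafE n (x : leaf n.+1) : x = lc (thead x) (behead_tuple x).
Proof. by apply: val_inj; case: x => [[|c s]]. Qed.

Lemma lc_inj n c c' (x x' : leaf n) : lc c x = lc c' x' -> c = c' /\ x = x'.
Proof. by move=> /(congr1 val) [-> /val_inj ->]. Qed.

Lemma thead_lc n c (x : leaf n) : thead (lc c x) = c. Proof. by []. Qed.
Lemma behead_lc n c (x : leaf n) : behead_tuple (lc c x) = x.
Proof. by apply: val_inj. Qed.

Definition Wf n (s : bool) (a b : {perm leaf n}) (x : leaf n.+1) : leaf n.+1 :=
  lc (thead x (+) s) ((if thead x then b else a) (behead_tuple x)).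

Lemma Wf_inj n s a b : injective (@Wf n s a b).
Proof.
move=> x y; rewrite [x]leafE [y]leafE /Wf !thead_lc !behead_lc.
move=> /lc_inj [h1 h2].
have e : thead x = thead y by move: h1; case: (thead x); case: (thead y); case: s.
rewrite e in h2 *; congr lc; move: h2; by case: (thead y) => /perm_inj.
Qed.

Definition W n s a b : {perm leaf n.+1} := perm (@Wf_inj n s a b).

Lemma WE n s a b c (x : leaf n) : W s a b (lc c x) = lc (c (+) s) ((if c then b else a) x).
Proof. by rewrite permE /Wf thead_lc behead_lc. Qed.

Lemma Wperm n (p q : {perm leaf n.+1}) : (forall c x, p (lc c x) = q (lc c x)) -> p = q.
Proof. by move=> h; apply/permP => x; rewrite [x]leafE h. Qed.

Lemma W_mul n s a b t c d :
  W s a b * W t c d = @W n (s (+) t) (a * (if s then d else c)) (b * (if s then c else d)).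
Proof.
apply: Wperm => e x; rewrite permM !WE addbA; congr lc.
by case: e; case: s; rewrite /= permM.
Qed.

Lemma W1 n : @W n false 1 1 = 1.
Proof. by apply: Wperm => e x; rewrite WE perm1 addbF; case: e; rewrite perm1. Qed.

Lemma W_inv n s a b :
  (@W n s a b)^-1 = W s (if s then b^-1 else a^-1) (if s then a^-1 else b^-1).
Proof.
apply/eqP; rewrite eq_invg_mul W_mul addbb.
by case: s => /=; rewrite !mulgV W1.
Qed.

Lemma tree_autP n (s : {perm leaf n}) :
  reflect (forall (x y : leaf n) j, take j x = take j y -> take j (s x) = take j (s y)) (tree_aut s).
Proof.
apply: (iffP forallP) => [h x y j e | h x].
  have [le|lt] := leqP j n.
    by have := forallP (forallP (h x) y) (Ordinal (le : j < n.+1)); move/implyP/(_ (introT eqP e))/eqP.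
  move: e; rewrite !take_oversize ?size_tuple ?(ltnW lt) // => /val_inj -> //.
apply/forallP => y; apply/forallP => j; apply/implyP => /eqP e; apply/eqP; exact: h.
Qed.

Lemma B_group n : group_set (B n).
Proof.
apply/group_setP; split.
  by rewrite inE; apply/tree_autP => x y j; rewrite !perm1.
move=> s t; rewrite !inE => /tree_autP hs /tree_autP ht; apply/tree_autP => x y j e.
by rewrite !permM; apply: ht; apply: hs.
Qed.
Canonical BG n := Group (B_group n).

Lemma take_lc n j c (x : leaf n) : take j.+1 (lc c x) = c :: take j x.
Proof. by []. Qed.

Lemma W_B n s a b : a \in B n -> b \in B n -> @W n s a b \in B n.+1.
Proof.
rewrite !inE => /tree_autP ha /tree_autP hb; apply/tree_autP => x y [|j]; first by rewrite !take0.
rewrite [x]leafE [y]leafE !take_lc => -[e1 e2].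
rewrite !WE !take_lc e1; congr cons.
by case: (thead y) in e1 *; [apply: hb | apply: ha].
Qed.

Lemma B_decomp n (s : {perm leaf n.+1}) : s \in B n.+1 ->
  exists sg a b, [/\ a \in B n, b \in B n & s = W sg a b].
Proof.
move=> sB; have := sB; rewrite inE => /tree_autP hs.
have sVB : s^-1 \in BG n.+1 by rewrite groupV.
rewrite inE in sVB; move/tree_autP: sVB => hsV.
have h1 c x y : thead (s (lc c x)) = thead (s (lc c y)).
  have e : take 1 (lc c x) = take 1 (lc c y) by rewrite !take_lc !take0.
  have := hs (lc c x) (lc c y) 1%N e.
  by rewrite [s (lc c x)]leafE [s (lc c y)]leafE !take_lc => -[].
have h2 x y : thead (s (lc true x)) != thead (s (lc false y)).
  apply/negP => /eqP e.
  have e1 : take 1 (s (lc true x)) = take 1 (s (lc false y)).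
    by rewrite [s (lc true x)]leafE [s (lc false y)]leafE !take_lc e !take0.
  by move: (hsV _ _ 1%N e1); rewrite !permK !take_lc => -[].
pose x0 := nseq_tuple n false.
pose sg := thead (s (lc false x0)).
have hh c x : thead (s (lc c x)) = c (+) sg.
  case: c; last by rewrite /sg (h1 _ _ x0).
  by have := h2 x x0; rewrite /sg; case: (thead _); case: (thead _).
pose fa c x := behead_tuple (s (lc c x)).
have fa_inj c : injective (fa c).
  move=> x y e; have : s (lc c x) = s (lc c y).
    by rewrite [s (lc c x)]leafE [s (lc c y)]leafE !hh; congr lc.
  by move/perm_inj/lc_inj => [].
have faB c : perm (fa_inj c) \in B n.
  rewrite inE; apply/tree_autP => x y j e; rewrite !permE /fa.
  have := hs (lc c x) (lc c y) j.+1; rewrite !take_lc e => /(_ erefl).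
  by rewrite [s (lc c x)]leafE [s (lc c y)]leafE !take_lc => -[].
exists sg, (perm (fa_inj false)), (perm (fa_inj true)); split => //.
apply: Wperm => c x; rewrite WE [s (lc c x)]leafE hh; congr lc.
by case: c; rewrite permE.
Qed.

Lemma W_tperm n (x y : leaf n) : W false (tperm x y) 1 = tperm (lc false x) (lc false y).
Proof.
apply: Wperm => c z; rewrite WE addbF; case: c.
  by rewrite perm1 tpermD // eq_sym; apply/eqP => /lc_inj [].
case: (tpermP x y z) => [->|->|nx ny]; rewrite ?tpermL ?tpermR //.
rewrite tpermD //; apply/eqP => /lc_inj [_ e]; [exact: nx | exact: ny].
Qed.

Lemma odd_Wl n (a : {perm leaf n}) : odd_perm (W false a 1) = odd_perm a.
Proof.
case: (prod_tpermP a) => ts -> dts; rewrite odd_perm_prod //.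
pose f (t : leaf n * leaf n) := (lc false t.1, lc false t.2).
have -> : W false (\prod_(t <- ts) tperm t.1 t.2) 1 = \prod_(t <- map f ts) tperm t.1 t.2.
  elim: ts {dts} => [|t ts IH]; first by rewrite !big_nil W1.
  by rewrite map_cons !big_cons -IH -W_tperm W_mul /= mulg1.
rewrite odd_perm_prod ?size_map //.
rewrite all_map; apply: sub_all dts => t /=; apply: contra => /eqP /lc_inj [_ ->] //.
Qed.

Definition T n := @W n true 1 1.

Lemma odd_Wr n (b : {perm leaf n}) : odd_perm (W false 1 b) = odd_perm b.
Proof.
have -> : W false 1 b = T n * W false b 1 * T n by rewrite /T !W_mul /= !mul1g !mulg1.
by rewrite !odd_permM odd_Wl addbC addbA addbb.
Qed.

Lemma odd_W0 n a b : odd_perm (@W n false a b) = odd_perm a (+) odd_perm b.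
Proof.
have -> : W false a b = W false a 1 * W false 1 b by rewrite W_mul /= mulg1 mul1g.
by rewrite odd_permM odd_Wl odd_Wr.
Qed.

Definition Rf m (x : leaf m.+2) : leaf m.+2 :=
  lc (thead (behead_tuple x)) (lc (thead x) (behead_tuple (behead_tuple x))).

Lemma RfE m c1 c2 (x : leaf m) : Rf (lc c1 (lc c2 x)) = lc c2 (lc c1 x).
Proof. by rewrite /Rf !behead_lc !thead_lc. Qed.

Lemma Wperm2 m (p q : {perm leaf m.+2}) :
  (forall c1 c2 x, p (lc c1 (lc c2 x)) = q (lc c1 (lc c2 x))) -> p = q.
Proof. by move=> h; apply: Wperm => c1 x; rewrite [x]leafE h. Qed.

Lemma Rf_inv m : involutive (@Rf m).
Proof. move=> x; rewrite [x]leafE [behead_tuple x]leafE (RfE (thead x) (thead (behead_tuple x))); by rewrite RfE. Qed.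

Lemma odd_T m : odd_perm (T m.+1) = false.
Proof.
pose R := perm (can_inj (@Rf_inv m)).
have -> : T m.+1 = R * W false (T m) (T m) * R.
  have RE y : R y = Rf y by rewrite permE.
  apply: Wperm2 => c1 c2 x; rewrite !permM !RE (RfE c1 c2 x) WE addbF !if_same.
  by rewrite /T !WE !if_same !perm1 RfE.
by rewrite !odd_permM odd_W0 addbb addbF addbb.
Qed.

Lemma odd_W m s a b : odd_perm (@W m.+1 s a b) = odd_perm a (+) odd_perm b.
Proof.
have -> : W s a b = W false a b * W s 1 1 by rewrite W_mul /= !mulg1.
rewrite odd_permM odd_W0; case: s; first by rewrite -/(T _) odd_T addbF.
by rewrite W1 odd_perm1 addbF.
Qed.

Definition N n := [~: B n, B n].

Definition Relb n (g : {perm leaf n.+1}) (sg : bool) (u : coset_of (N n)) (ea eb : bool) : bool :=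
  [exists a : {perm leaf n}, exists b : {perm leaf n},
    [&& g == W sg a b, a \in B n, b \in B n, coset (N n) (a * b) == u &
        (odd_perm a == ea) && (odd_perm b == eb)]].

Lemma RelP n g sg u ea eb :
  reflect (exists a b, [/\ g = W sg a b, a \in B n, b \in B n,
     coset (N n) (a * b) = u & odd_perm a = ea /\ odd_perm b = eb])
   (@Relb n g sg u ea eb).
Proof.
apply: (iffP existsP) => [[a /existsP [b /and5P [/eqP e1 h2 h3 /eqP e4 /andP [/eqP e5 /eqP e6]]]]|].
  by exists a, b; split.
by move=> [a [b [e1 h2 h3 e4 [e5 e6]]]]; exists a; apply/existsP; exists b; rewrite e1 e4 e5 e6 h2 h3 !eqxx.
Qed.

Lemma nB n : B n \subset 'N(N n).
Proof. exact: (der_norm 1 (BG n)). Qed.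

Lemma inN n x : x \in B n -> x \in 'N(N n).
Proof. by move=> h; apply: (subsetP (nB n)). Qed.

Lemma abB n : abelian (B n / N n).
Proof. exact: (sub_der1_abelian (G := BG n) (subxx _)). Qed.

Lemma qC n x y : x \in B n -> y \in B n ->
  coset (N n) x * coset (N n) y = coset (N n) y * coset (N n) x.
Proof.
move=> hx hy; have /centsP h := abB n.
by apply: h; apply: mem_quotient.
Qed.

Lemma qM n x y : x \in B n -> y \in B n ->
  coset (N n) (x * y) = coset (N n) x * coset (N n) y.
Proof. by move=> hx hy; rewrite morphM ?inN. Qed.

Lemma qV n x : x \in B n -> coset (N n) x^-1 = (coset (N n) x)^-1.
Proof. by move=> hx; rewrite morphV ?inN. Qed.

Lemma RelW n sg a b : a \in B n -> b \in B n ->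
  Relb (W sg a b) sg (coset (N n) (a * b)) (odd_perm a) (odd_perm b).
Proof. by move=> ha hb; apply/RelP; exists a, b; split. Qed.

Lemma RelM n g h sg tg u v ea eb fa fb :
  @Relb n g sg u ea eb -> Relb h tg v fa fb ->
  Relb (g * h) (sg (+) tg) (u * v) (ea (+) (if sg then fb else fa)) (eb (+) (if sg then fa else fb)).
Proof.
move=> /RelP [a [b [-> ha hb <- [<- <-]]]] /RelP [c [d [-> hc hd <- [<- <-]]]].
apply/RelP; rewrite W_mul.
exists (a * (if sg then d else c)), (b * (if sg then c else d)); split.
- by [].
- by case: sg; rewrite groupM.
- by case: sg; rewrite groupM.
- case: sg; rewrite !qM ?groupM //.
    by rewrite -!mulgA; congr (_ * _); rewrite !mulgA (qC hd hb) -!mulgA (qC hd hc).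
  by rewrite -!mulgA; congr (_ * _); rewrite !mulgA (qC hc hb).
- by case: sg; rewrite !odd_permM.
Qed.

Lemma RelV n g sg u ea eb :
  @Relb n g sg u ea eb ->
  Relb g^-1 sg u^-1 (if sg then eb else ea) (if sg then ea else eb).
Proof.
move=> /RelP [a [b [-> ha hb <- [<- <-]]]].
apply/RelP; rewrite W_inv.
exists (if sg then b^-1 else a^-1), (if sg then a^-1 else b^-1); split.
- by [].
- by case: sg; rewrite groupV.
- by case: sg; rewrite groupV.
- case: sg; rewrite !qM ?groupV // !qV // invMg //.
  by rewrite -!qV // qC ?groupV.
- by case: sg; rewrite !odd_permV.
Qed.

Lemma Rel_mem n g sg u ea eb : @Relb n g sg u ea eb -> u \in B n / N n.
Proof. by move=> /RelP [a [b [_ ha hb <- _]]]; apply: mem_quotient; rewrite groupM. Qed.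

Lemma RelComm n g h sg tg u v ea eb fa fb :
  @Relb n g sg u ea eb -> Relb h tg v fa fb ->
  exists X Y, Relb [~ g, h] false 1 X Y /\ (ea = eb -> fa = fb -> X = false /\ Y = false).
Proof.
move=> H1 H2.
have uB := Rel_mem H1; have vB := Rel_mem H2.
have := RelM (RelM (RelM (RelV H1) (RelV H2)) H1) H2.
have -> : u^-1 * v^-1 * u * v = 1.
  have cuv : commute u v by have /centsP := abB n; apply.
  by rewrite -(mulgA _ u v) cuv mulgA mulgKV mulVg.
have -> : [~ g, h] = g^-1 * h^-1 * g * h by rewrite /commg /conjg !mulgA.
clear H1 H2 uB vB.
case: sg tg ea eb fa fb => [] [] [] [] [] [] /= H; do 2 eexists; (split; [exact: H | by []]).
Qed.

Lemma G_group n : group_set (G n).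
Proof.
apply/group_setP; split.
  by apply/setIdP; split; [exact: (group1 (BG n)) | rewrite odd_perm1].
move=> s t /setIdP [sB so] /setIdP [tB to]; apply/setIdP; split.
  exact: (groupM (sB : s \in BG n)).
by rewrite odd_permM (negbTE so) (negbTE to).
Qed.
Canonical GG n := Group (G_group n).

Definition KB n := [set g : {perm leaf n.+1} | [exists e1, exists e2, Relb g false 1 e1 e2]].
Definition KG n := [set g : {perm leaf n.+1} | Relb g false 1 false false].

Lemma Rel1 n : @Relb n 1 false 1 false false.
Proof. by have := RelW false (group1 (BG n)) (group1 (BG n)); rewrite W1 mulg1 morph1 odd_perm1. Qed.

Lemma KB_group n : group_set (KB n).
Proof.
apply/group_setP; split.
  by rewrite inE; apply/existsP; exists false; apply/existsP; exists false; apply: Rel1.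
move=> g h; rewrite !inE => /existsP [e1 /existsP [e2 H1]] /existsP [f1 /existsP [f2 H2]].
by have := RelM H1 H2; rewrite mulg1 /= => H; apply/existsP; eexists; apply/existsP; eexists; exact: H.
Qed.
Canonical KBG n := Group (KB_group n).

Lemma KG_group n : group_set (KG n).
Proof.
apply/group_setP; split; first by rewrite inE; apply: Rel1.
move=> g h; rewrite !inE => H1 H2.
by have := RelM H1 H2; rewrite mulg1.
Qed.
Canonical KGG n := Group (KG_group n).

Lemma NB_sub n : [~: B n.+1, B n.+1] \subset KB n.
Proof.
rewrite -[KB n]/(gval (KBG n)) gen_subG; apply/subsetP => _ /imset2P [g h gB hB ->].
have [sg [a [b [ha hb eg]]]] := B_decomp gB.
have [tg [c [d [hc hd eh]]]] := B_decomp hB.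
have H1 := RelW sg ha hb; have H2 := RelW tg hc hd.
rewrite -eg in H1; rewrite -eh in H2.
have [X [Y [H _]]] := RelComm H1 H2.
by rewrite inE; apply/existsP; exists X; apply/existsP; exists Y.
Qed.

Lemma NG_sub m : [~: G m.+2, G m.+2] \subset KG m.+1.
Proof.
rewrite -[KG _]/(gval (KGG _)) gen_subG; apply/subsetP => _ /imset2P [g h gG hG ->].
have parity (s : {perm leaf m.+2}) : s \in G m.+2 -> exists sg a b, 
   [/\ a \in B m.+1, b \in B m.+1, s = W sg a b & odd_perm a = odd_perm b].
  move=> /setIdP [sB so]; have [sg [a [b [ha hb es]]]] := B_decomp sB.
  exists sg, a, b; split => //; move: so; rewrite es odd_W.
  by case: (odd_perm a); case: (odd_perm b).
have [sg [a [b [ha hb eg oab]]]] := parity g gG.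
have [tg [c [d [hc hd eh ocd]]]] := parity h hG.
have H1 := RelW sg ha hb; have H2 := RelW tg hc hd.
rewrite -eg in H1; rewrite -eh in H2.
have [X [Y [H hXY]]] := RelComm H1 H2.
by have [eX eY] := hXY oab ocd; rewrite inE; rewrite eX eY in H.
Qed.

Lemma comm_formula n (x y b d : {perm leaf n}) : x * y = [~ b, d] ->
  W false x y = [~ W true 1 b, W false (d * y^-1) d].
Proof.
move=> e; rewrite /commg /conjg !W_inv !W_mul /=; congr W.
  have ce : [~ b, d] = b^-1 * d^-1 * b * d by rewrite /commg /conjg !mulgA.
  by rewrite !mulgA -ce -e mulgK.
by rewrite invg1 !mul1g invMg invgK mulgKV.
Qed.

Lemma p0 (p : {perm leaf 0}) : p = 1.
Proof. by apply/permP => z; rewrite perm1 (tuple0 (p z)) (tuple0 z). Qed.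

Lemma KB0 w : w \in KB 0 -> w = 1.
Proof.
rewrite inE => /existsP [e1 /existsP [e2 /RelP [a [b [-> _ _ _ _]]]]].
by rewrite (p0 a) (p0 b) W1.
Qed.

Lemma GsubB n : G n \subset B n.
Proof. by apply/subsetP => s /setIdP []. Qed.

Lemma M n : 1 <= n -> forall w, w \in [~: B n, B n] ->
  exists b d, [/\ b \in G n, d \in B n & w = [~ b, d]].
Proof.
elim: n => // -[|m] IH _ w wN.
  have -> := KB0 (subsetP (NB_sub 0) w wN).
  exists 1, 1; split; [exact: (group1 (GG 1)) | exact: (group1 (BG 1)) | by rewrite comm1g].
have := subsetP (NB_sub m.+1) w wN; rewrite inE => /existsP [e1 /existsP [e2]].
move=> /RelP [x [y [-> hx hy ec _]]].
have xyN : x * y \in [~: B m.+1, B m.+1].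
  by apply: coset_idr ec; apply: inN; rewrite (groupM (hx : x \in BG _)).
have [b [d [hb hd e]]] := IH isT _ xyN.
exists (W true 1 b), (W false (d * y^-1) d); split.
- apply/setIdP; split; first by apply: W_B; [exact: (group1 (BG _)) | exact: (subsetP (GsubB _))].
  by rewrite odd_W odd_perm1; case/setIdP: hb.
- by apply: W_B => //; rewrite (groupM (hd : d \in BG _)) ?groupV.
- exact: comm_formula.
Qed.

Lemma rev_incl k : [set pcomm f1 f2 | f1 in G k, f2 in G k] \subset [~: G k, G k].
Proof.
apply/subsetP => _ /imset2P [f1 f2 h1 h2 ->].
have -> : pcomm f1 f2 = [~ f1^-1, f2^-1] by rewrite /pcomm /commg /conjg !invgK !mulgA.
by apply: mem_commg; rewrite groupV.
Qed.

Theorem theorem4 (k : nat) (hk : 1 <= k) :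
  ([~: G k, G k] = [set pcomm f1 f2 | f1 in G k, f2 in G k])%g.
Proof.
apply/eqP; rewrite eqEsubset rev_incl andbT.
case: k hk => // -[|m] _; apply/subsetP => w wG.
  have wB : w \in [~: B 1, B 1] by apply: (subsetP (commgSS (GsubB 1) (GsubB 1))).
  have -> := KB0 (subsetP (NB_sub 0) w wB).
  apply/imset2P; exists 1 1; [exact: (group1 (GG 1)) | exact: (group1 (GG 1)) |].
  by rewrite /pcomm invg1 !mulg1.
have := subsetP (NG_sub m) w wG; rewrite inE.
move=> /RelP [x [y [-> hx hy ec [ox oy]]]].
have xyN : x * y \in [~: B m.+1, B m.+1].
  by apply: coset_idr ec; apply: inN; rewrite (groupM (hx : x \in BG _)).
have [b [d [hb hd e]]] := @M m.+1 isT _ xyN.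
have gG : W true 1 b \in GG m.+2.
  apply/setIdP; split; first by apply: W_B; [exact: (group1 (BG _)) | exact: (subsetP (GsubB _))].
  by rewrite odd_W odd_perm1; case/setIdP: hb.
have hG : W false (d * y^-1) d \in GG m.+2.
  apply/setIdP; split; first by apply: W_B => //; rewrite (groupM (hd : d \in BG _)) ?groupV.
  by rewrite odd_W !odd_permM odd_permV oy addbF addbb.
apply/imset2P; exists (W true 1 b)^-1 (W false (d * y^-1) d)^-1; rewrite ?groupV //.
by rewrite (comm_formula e) /pcomm /commg /conjg !invgK !mulgA.
Qed.
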